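(* Let $C\subseteq\mathbb{F}_q^n$ be a perfect code (binary or non-binary) with covering radius $\rho$. Then the set $C(\rho)$ of vectors at distance $\rho$ from $C$ has minimum distance $1$.
   Context: Hamming distance $d$; $d({\bf v},C)=\min_{{\bf x}\in C}d({\bf v},{\bf x})$; covering radius $\rho=\max_{\bf v}d({\bf v},C)$; $C(\rho)=\{{\bf v}\in\mathbb{F}_q^n: d({\bf v},C)=\rho\}$. For a code with minimum distance $d$, the packing radius is $e=\lfloor (d-1)/2\rfloor$; the code is perfect if $e=\rho$. Codes need not be linear. *)

(* Defs.v *)
From mathcomp Require Import all_boot all_order all_algebra.
Set Implicit Arguments. Unset Strict Implicit. Unset Printing Implicit Defensive.

Section Hamming.
Variables (F : finFieldType) (n : nat).

Definition hdist (x y : 'rV[F]_n) : nat := #|[set i : 'I_n | x ord0 i != y ord0 i]|.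

(* Minimum distance of a set S of vectors: the minimum of hdist x y over
   distinct x, y in S (equals the default n.+1 if S has fewer than 2 elements). *)
Definition mindist (S : {set 'rV[F]_n}) : nat :=
  \big[minn/n.+1]_(x in S) \big[minn/n.+1]_(y in S | y != x) hdist x y.

Definition dist_to (C : {set 'rV[F]_n}) (v : 'rV[F]_n) : nat :=
  \big[minn/n.+1]_(x in C) hdist v x.

Definition covering_radius (C : {set 'rV[F]_n}) : nat :=
  \max_(v : 'rV[F]_n) dist_to C v.

Definition at_dist (C : {set 'rV[F]_n}) (r : nat) : {set 'rV[F]_n} :=
  [set v | dist_to C v == r].

Definition packing_radius (C : {set 'rV[F]_n}) : nat := (mindist C).-1./2.

Definition perfect (C : {set 'rV[F]_n}) : Prop :=
  packing_radius C = covering_radius C.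

End Hamming.

(* Main.v *)
Require Import Defs.
From mathcomp Require Import all_boot all_order all_algebra.
From mathcomp Require Import zify.
Import GRing.Theory.

Section Aux.
Variables (F : finFieldType) (n : nat).
Local Notation V := 'rV[F]_n.

Lemma big_min_le (I : finType) (P : pred I) (f : I -> nat) i0 :
  P i0 -> \big[minn/n.+1]_(i | P i) f i <= f i0.
Proof.
move=> Pi; rewrite -big_filter.
have : i0 \in [seq i <- index_enum I | P i] by rewrite mem_filter Pi mem_index_enum.
elim: [seq i <- index_enum I | P i] => // a s IH.
rewrite inE big_cons => /orP [/eqP <-|h]; first by rewrite geq_minl.
by rewrite geq_min IH ?orbT.
Qed.

Lemma big_min_ge (I : finType) (P : pred I) (f : I -> nat) m :
  m <= n.+1 -> (forall i, P i -> m <= f i) -> m <= \big[minn/n.+1]_(i | P i) f i.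
Proof.
move=> hm H; apply: (big_ind (fun x => m <= x)) => //.
  by move=> x y hx hy; rewrite leq_min hx hy.
Qed.

Lemma hdist_sym (x y : V) : hdist x y = hdist y x.
Proof. by rewrite /hdist; apply: eq_card => i; rewrite !inE eq_sym. Qed.

Lemma hdist_tri (x y z : V) : hdist x z <= hdist x y + hdist y z.
Proof.
rewrite /hdist.
apply: (leq_trans (subset_leq_card (_ : _ \subset [set i | x ord0 i != y ord0 i] :|: [set i | y ord0 i != z ord0 i]))).
  apply/subsetP => i; rewrite !inE => h; apply: contraNT h; rewrite negb_or !negbK => /andP [/eqP e1 /eqP e2].
  by rewrite e1 e2.
by rewrite cardsU leq_subr.
Qed.

Lemma hdist_le_n (x y : V) : hdist x y <= n.
Proof. by rewrite /hdist; apply: leq_trans (max_card _) _; rewrite card_ord. Qed.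

Lemma hdist_pos (x y : V) : x != y -> 0 < hdist x y.
Proof.
move=> nxy; rewrite lt0n; apply: contra nxy => /eqP/cards0_eq h.
apply/eqP/rowP => i; apply/eqP.
have := in_set0 i; rewrite -h inE; by case: eqP.
Qed.

Definition sh (c : V) (A : {set 'I_n}) : V := \row_i (c ord0 i + ((i \in A)%:R)%R)%R.

Lemma sh_neq c A B i : (sh c A ord0 i != sh c B ord0 i) = ((i \in A) != (i \in B)).
Proof.
rewrite !mxE (inj_eq (addrI _)).
case: (i \in A); case: (i \in B) => //=; rewrite ?eqxx //; apply/negP => /eqP h; move: h; rewrite ?mulr1n ?mulr0n => h; have := oner_neq0 F; by rewrite ?h eqxx // -h eqxx.
Qed.

Lemma sh0 c : sh c set0 = c.
Proof. by apply/rowP => i; rewrite mxE ord1 in_set0 addr0. Qed.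

Lemma card_lt k : k <= n -> #|[set i : 'I_n | i < k]| = k.
Proof.
move=> hk.
have -> : [set i : 'I_n | i < k] = widen_ord hk @: [set: 'I_k].
  apply/setP => i; rewrite !inE; apply/idP/imsetP.
    by move=> hi; exists (Ordinal hi) => //; apply: val_inj.
  by case=> j _ ->; rewrite /= ltn_ord.
rewrite card_imset ?cardsT ?card_ord //.
by move=> a b /(congr1 val) /= h; apply: val_inj.
Qed.

End Aux.
Arguments big_min_le {n I P f} i0.
Arguments big_min_ge {n I P f} m.
Arguments hdist_sym {F n}.
Arguments hdist_tri {F n}.
Arguments hdist_le_n {F n}.
Arguments hdist_pos {F n} [x y].
Arguments sh {F n}.
Arguments sh_neq {F n}.
Arguments sh0 {F n}.
Arguments card_lt {n} [k].

Theorem lemma2p1 (F : finFieldType) (n : nat) (C : {set 'rV[F]_n}) :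
  1 < #|C| -> perfect C ->
  mindist (at_dist C (covering_radius C)) = 1.
Proof.
move=> /card_gt1P [c [c' [cC c'C ncc']]] hperf.
set r := covering_radius C.
have hmin : forall a b, a \in C -> b \in C -> a != b -> 2 * r + 1 <= hdist a b.
  move=> a b aC bC nab.
  have h1 : mindist C <= hdist a b.
    rewrite /mindist; apply: leq_trans (big_min_le a aC) _.
    by apply: big_min_le; rewrite bC eq_sym.
  have h2 := hdist_pos nab.
  move: hperf; rewrite /perfect /packing_radius -/r => hr.
  have := odd_double_half (mindist C).-1; rewrite hr -addnn => h3.
  lia.
have hcc := hmin _ _ cC c'C ncc'.
have hrn : r < n by have := hdist_le_n c c'; lia.
set A := [set i : 'I_n | i < r].
set B := [set i : 'I_n | i < r.+1].
set x := sh c A. set y := sh c B.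
have dxc : hdist x c = r.
  rewrite -{1}(sh0 c) /hdist -[RHS](card_lt (ltnW hrn)).
  apply: eq_card => i; rewrite /x /y !inE sh_neq !inE; by case: (_ < _).
have dyc : hdist y c = r.+1.
  rewrite -{1}(sh0 c) /hdist -[RHS](card_lt hrn).
  apply: eq_card => i; rewrite /x /y !inE sh_neq !inE; by case: (_ < _).
have dxy : hdist x y = 1.
  rewrite /hdist -[RHS](cards1 (Ordinal hrn)).
  apply: eq_card => i; rewrite !inE sh_neq !inE.
  apply/idP/eqP.
    move=> h; apply: val_inj => /=; move: h; rewrite ltnS; case: (ltngtP i r) => //.
  by move=> ->; rewrite /= ltnn leqnn.
have upper : forall v, dist_to C v <= r.
  by move=> v; rewrite /r /covering_radius; apply: leq_bigmax.
have xS : x \in at_dist C r.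
  rewrite inE eqn_leq upper /=; apply: big_min_ge; first by lia.
  move=> b bC; case: (eqVneq b c) => [->|nbc]; first by rewrite dxc.
  have := hmin _ _ bC cC nbc; have := hdist_tri b x c.
  by rewrite dxc (hdist_sym x b); lia.
have yS : y \in at_dist C r.
  rewrite inE eqn_leq upper /=; apply: big_min_ge; first by lia.
  move=> b bC; case: (eqVneq b c) => [->|nbc]; first by rewrite dyc.
  have := hmin _ _ bC cC nbc; have := hdist_tri b y c.
  by rewrite dyc (hdist_sym y b); lia.
have nxy : y != x by apply/eqP => e; move: dxc dyc; rewrite e; lia.
apply/eqP; rewrite eqn_leq; apply/andP; split.
  rewrite /mindist; apply: leq_trans (big_min_le x xS) _.
  by rewrite -[X in _ <= X]dxy; apply: big_min_le; rewrite yS.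
apply: big_min_ge => // a aS; apply: big_min_ge => // b /andP [_ nba].
by apply: hdist_pos; rewrite eq_sym.
Qed.
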